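(* Let $\mathbb{C}$ be a pointed protomodular category, let $S$ and $T$ be objects of $\mathbb{C}$, and let $X=S\times T$. If $X$ is proto-complete (respectively complete, complete${}^*$, strong-complete), then so are both $S$ and $T$.
   Context: A pointed category with finite limits is protomodular if the split short five lemma holds. A normal monomorphism is a kernel of some morphism; a protosplit monomorphism is a kernel of a split epimorphism; a monomorphism $m:S\to Y$ is Bourn-normal if there is an equivalence relation $(R,r_1,r_2)$ on $Y$ and $\tilde m:S\times S\to R$ with $r_1\tilde m=m\pi_1$, $r_2\tilde m=m\pi_2$ and the square $r_1\tilde m=m\pi_1$ a pullback. An object $X$ is proto-complete if every protosplit monomorphism with domain $X$ is a split monomorphism; complete if every normal monomorphism with domain $X$ is a split monomorphism; complete${}^*$ if every Bourn-normal monomorphism with domain $X$ is a split monomorphism; strong-complete if every protosplit monomorphism with domain $X$ is a split monomorphism with a unique retraction. *)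

(* Defs.v *)
Set Implicit Arguments.
Unset Strict Implicit.

Record Category := {
  Ob :> Type;
  Hom : Ob -> Ob -> Type;
  comp : forall {A B C : Ob}, Hom B C -> Hom A B -> Hom A C;
  idm : forall A : Ob, Hom A A;
  comp_assoc : forall (A B C D : Ob) (f : Hom C D) (g : Hom B C) (h : Hom A B),
      comp f (comp g h) = comp (comp f g) h;
  comp_id_l : forall (A B : Ob) (f : Hom A B), comp (idm B) f = f;
  comp_id_r : forall (A B : Ob) (f : Hom A B), comp f (idm A) = f
}.

Arguments Hom {c} _ _.
Arguments comp {c A B C} _ _.
Arguments idm {c} _.

Notation "g \o f" := (comp g f) (at level 40, left associativity).

Section Notions.
Context {C : Category}.

Definition is_iso {A B : C} (f : Hom A B) : Prop :=
  exists g : Hom B A, g \o f = idm A /\ f \o g = idm B.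

Definition is_mono {A B : C} (m : Hom A B) : Prop :=
  forall (Z : C) (x y : Hom Z A), m \o x = m \o y -> x = y.

Definition split_mono {A B : C} (m : Hom A B) : Prop :=
  exists r : Hom B A, r \o m = idm A.

Definition split_mono_unique_retraction {A B : C} (m : Hom A B) : Prop :=
  exists! r : Hom B A, r \o m = idm A.

Definition split_epi {A B : C} (p : Hom A B) : Prop :=
  exists s : Hom B A, p \o s = idm B.

Definition is_zero_object (z : C) : Prop :=
  (forall A : C, exists! f : Hom z A, True) /\
  (forall A : C, exists! f : Hom A z, True).

Definition pointed : Prop := exists z : C, is_zero_object z.

Definition zero_mor {A B : C} (f : Hom A B) : Prop :=
  exists (z : C) (g : Hom A z) (h : Hom z B), is_zero_object z /\ f = h \o g.

Definition is_kernel {K A B : C} (k : Hom K A) (f : Hom A B) : Prop :=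
  zero_mor (f \o k) /\
  forall (Z : C) (x : Hom Z A), zero_mor (f \o x) ->
    exists! y : Hom Z K, k \o y = x.

Definition is_product {P S T : C} (p1 : Hom P S) (p2 : Hom P T) : Prop :=
  forall (Z : C) (a : Hom Z S) (b : Hom Z T),
    exists! h : Hom Z P, p1 \o h = a /\ p2 \o h = b.

Definition is_pullback {P A B D : C} (p1 : Hom P A) (p2 : Hom P B)
    (f : Hom A D) (g : Hom B D) : Prop :=
  f \o p1 = g \o p2 /\
  forall (Z : C) (a : Hom Z A) (b : Hom Z B), f \o a = g \o b ->
    exists! h : Hom Z P, p1 \o h = a /\ p2 \o h = b.

Definition is_terminal (t : C) : Prop := forall A : C, exists! f : Hom A t, True.

Definition has_finite_limits : Prop :=
  (exists t : C, is_terminal t) /\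
  (forall (A B D : C) (f : Hom A D) (g : Hom B D),
      exists (P : C) (p1 : Hom P A) (p2 : Hom P B), is_pullback p1 p2 f g).

(* Pointed protomodular: the split short five lemma holds. *)
Definition protomodular : Prop :=
  forall (K A B K' A' B' : C)
         (k : Hom K A) (p : Hom A B) (s : Hom B A)
         (k' : Hom K' A') (p' : Hom A' B') (s' : Hom B' A')
         (u : Hom K K') (v : Hom A A') (w : Hom B B'),
    p \o s = idm B -> is_kernel k p ->
    p' \o s' = idm B' -> is_kernel k' p' ->
    v \o k = k' \o u -> p' \o v = w \o p -> v \o s = s' \o w ->
    is_iso u -> is_iso w -> is_iso v.

(* Internal equivalence relation (R, r1, r2) on Y: (r1, r2) jointly monic
   and, for every object Z, the induced relation on Hom Z Y is reflexive,
   symmetric and transitive. *)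
Definition is_equivalence_relation {R Y : C} (r1 r2 : Hom R Y) : Prop :=
  (forall (Z : C) (a b : Hom Z R), r1 \o a = r1 \o b -> r2 \o a = r2 \o b -> a = b) /\
  (forall (Z : C) (x : Hom Z Y), exists c : Hom Z R, r1 \o c = x /\ r2 \o c = x) /\
  (forall (Z : C) (a : Hom Z R), exists c : Hom Z R, r1 \o c = r2 \o a /\ r2 \o c = r1 \o a) /\
  (forall (Z : C) (a b : Hom Z R), r2 \o a = r1 \o b ->
      exists c : Hom Z R, r1 \o c = r1 \o a /\ r2 \o c = r2 \o b).

Definition normal_mono {S Y : C} (m : Hom S Y) : Prop :=
  exists (B : C) (f : Hom Y B), is_kernel m f.

Definition protosplit_mono {S Y : C} (m : Hom S Y) : Prop :=
  exists (B : C) (f : Hom Y B), split_epi f /\ is_kernel m f.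

Definition bourn_normal {S Y : C} (m : Hom S Y) : Prop :=
  is_mono m /\
  exists (R : C) (r1 r2 : Hom R Y), is_equivalence_relation r1 r2 /\
  exists (P : C) (pi1 pi2 : Hom P S), is_product pi1 pi2 /\
  exists mt : Hom P R,
    r1 \o mt = m \o pi1 /\ r2 \o mt = m \o pi2 /\ is_pullback mt pi1 r1 m.

Definition proto_complete (X : C) : Prop :=
  forall (Y : C) (m : Hom X Y), protosplit_mono m -> split_mono m.

Definition complete (X : C) : Prop :=
  forall (Y : C) (m : Hom X Y), normal_mono m -> split_mono m.

Definition complete_star (X : C) : Prop :=
  forall (Y : C) (m : Hom X Y), bourn_normal m -> split_mono m.

Definition strong_complete (X : C) : Prop :=
  forall (Y : C) (m : Hom X Y), protosplit_mono m -> split_mono_unique_retraction m.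

End Notions.

(* Main.v *)
Require Import Defs.
From Stdlib Require Import ClassicalEpsilon.

Section Aux.
Context {C : Category}.

Lemma unique_ex {A : Type} {P : A -> Prop} : (exists! x, P x) -> exists x, P x.
Proof. intros [x [Hx _]]. eauto. Qed.

Definition pr {P S T : C} {p1 : Hom P S} {p2 : Hom P T} (H : is_product p1 p2)
  {Z : C} (a : Hom Z S) (b : Hom Z T) : Hom Z P :=
  proj1_sig (constructive_indefinite_description _ (unique_ex (H Z a b))).

Lemma pr_spec {P S T : C} {p1 : Hom P S} {p2 : Hom P T} (H : is_product p1 p2)
  {Z : C} (a : Hom Z S) (b : Hom Z T) : p1 \o pr H a b = a /\ p2 \o pr H a b = b.
Proof. unfold pr. destruct (constructive_indefinite_description _ _) as [h Hh]. exact Hh. Qed.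

Lemma pr1 {P S T : C} {p1 : Hom P S} {p2 : Hom P T} (H : is_product p1 p2)
  {Z : C} (a : Hom Z S) (b : Hom Z T) : p1 \o pr H a b = a.
Proof. apply (pr_spec H). Qed.
Lemma pr2 {P S T : C} {p1 : Hom P S} {p2 : Hom P T} (H : is_product p1 p2)
  {Z : C} (a : Hom Z S) (b : Hom Z T) : p2 \o pr H a b = b.
Proof. apply (pr_spec H). Qed.

Lemma prod_ext {P S T : C} {p1 : Hom P S} {p2 : Hom P T} (H : is_product p1 p2)
  {Z : C} (h h' : Hom Z P) : p1 \o h = p1 \o h' -> p2 \o h = p2 \o h' -> h = h'.
Proof.
  intros E1 E2. destruct (H Z (p1 \o h) (p2 \o h)) as [x [_ U]].
  transitivity x; [symmetry; apply U; auto | apply U; split; symmetry; assumption].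
Qed.

Lemma pr_comp {P S T : C} {p1 : Hom P S} {p2 : Hom P T} (H : is_product p1 p2)
  {Z W : C} (a : Hom Z S) (b : Hom Z T) (g : Hom W Z) :
  pr H a b \o g = pr H (a \o g) (b \o g).
Proof.
  apply (prod_ext H); rewrite comp_assoc, ?pr1, ?pr2, ?comp_assoc, ?pr1, ?pr2; reflexivity.
Qed.

Lemma pr_inj {P S T : C} {p1 : Hom P S} {p2 : Hom P T} (H : is_product p1 p2)
  {Z : C} (a a' : Hom Z S) (b b' : Hom Z T) : pr H a b = pr H a' b' -> a = a' /\ b = b'.
Proof.
  intro E. split.
  - rewrite <- (pr1 H a b), <- (pr1 H a' b'), E. reflexivity.
  - rewrite <- (pr2 H a b), <- (pr2 H a' b'), E. reflexivity.
Qed.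

Lemma prod_sym {P S T : C} {p1 : Hom P S} {p2 : Hom P T} :
  is_product p1 p2 -> is_product p2 p1.
Proof.
  intros H Z a b. destruct (H Z b a) as [x [[E1 E2] U]].
  exists x. split; [split; auto|]. intros y [F1 F2]. apply U; auto.
Qed.

Lemma has_prod : @has_finite_limits C -> forall A B : C, exists P (p1 : Hom P A) (p2 : Hom P B), is_product p1 p2.
Proof.
  intros [[t Ht] Hpb] A B.
  destruct (Ht A) as [f _]. destruct (Ht B) as [g _].
  destruct (Hpb A B t f g) as [P [p1 [p2 [E U]]]].
  exists P, p1, p2. intros Z a b. apply U.
  destruct (Ht Z) as [x [_ V]]. rewrite <- (V (f \o a) I). apply V; auto.
Qed.

Section Zero.
Variable z0 : C.
Hypothesis Hz : is_zero_object z0.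

Definition to_z (A : C) : Hom A z0 :=
  proj1_sig (constructive_indefinite_description _ (unique_ex (proj2 Hz A))).
Definition from_z (A : C) : Hom z0 A :=
  proj1_sig (constructive_indefinite_description _ (unique_ex (proj1 Hz A))).
Definition zm (A B : C) : Hom A B := from_z B \o to_z A.

Lemma to_gen {z : C} (Hz' : is_zero_object z) {A : C} (f g : Hom A z) : f = g.
Proof. destruct (proj2 Hz' A) as [x [_ U]]. rewrite <- (U f I). apply U; auto. Qed.
Lemma from_gen {z : C} (Hz' : is_zero_object z) {A : C} (f g : Hom z A) : f = g.
Proof. destruct (proj1 Hz' A) as [x [_ U]]. rewrite <- (U f I). apply U; auto. Qed.

Lemma zm_l {A B D : C} (f : Hom A B) : zm B D \o f = zm A D.
Proof. unfold zm. rewrite <- comp_assoc. f_equal. apply (to_gen Hz). Qed.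
Lemma zm_r {A B D : C} (f : Hom B D) : f \o zm A B = zm A D.
Proof. unfold zm. rewrite comp_assoc. f_equal. apply (from_gen Hz). Qed.

Lemma zm_zero {A B : C} : zero_mor (zm A B).
Proof. exists z0, (to_z A), (from_z B). split; auto. Qed.

Lemma zero_zm {A B : C} (f : Hom A B) : zero_mor f -> f = zm A B.
Proof.
  intros [z [g [h [Hz' ->]]]].
  destruct (proj1 Hz z) as [v _].
  assert (E : v \o to_z z = idm z) by apply (from_gen Hz').
  rewrite <- (comp_id_r h), <- E. unfold zm.
  rewrite <- !comp_assoc, (comp_assoc h v).
  rewrite (from_gen Hz (h \o v) (from_z B)), (to_gen Hz (to_z z \o g) (to_z A)). reflexivity.
Qed.

End Zero.
End Aux.

Hint Rewrite <- @comp_assoc : cat.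
Hint Rewrite @comp_id_l @comp_id_r @pr1 @pr2 @pr_comp @zm_l @zm_r : cat.
Ltac simp := autorewrite with cat.

Section Main.
Context {C : Category}.
Variable z0 : C.
Hypothesis Hz : is_zero_object z0.
Notation zm := (zm z0 Hz).
Variables (S T X : C) (pS : Hom X S) (pT : Hom X T).
Hypothesis HX : is_product pS pT.

Section WithY.
Variables (Y YT : C) (q1 : Hom YT Y) (q2 : Hom YT T).
Hypothesis HYT : is_product q1 q2.
Variable m : Hom S Y.

Definition mT : Hom X YT := pr HYT (m \o pS) pT.

Lemma retr_lemma (r : Hom YT X) : r \o mT = idm X ->
  (pS \o (r \o pr HYT (idm Y) (zm Y T))) \o m = idm S.
Proof.
  intro E.
  assert (F : pr HYT (idm Y) (zm Y T) \o m = mT \o pr HX (idm S) (zm S T)).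
  { unfold mT. apply (prod_ext HYT); simp; reflexivity. }
  rewrite <- !comp_assoc, F, (comp_assoc r), E. simp. reflexivity.
Qed.

Lemma ker_lemma {B : C} (f : Hom Y B) : is_kernel m f -> is_kernel mT (f \o q1).
Proof.
  intros [H0 Hu]. apply (@zero_zm _ z0 Hz) in H0.
  split.
  - replace ((f \o q1) \o mT) with (zm X B). apply (@zm_zero _ z0 Hz).
    unfold mT. simp. rewrite comp_assoc, H0. simp. reflexivity.
  - intros Z x Hx. apply (@zero_zm _ z0 Hz) in Hx.
    assert (Hx' : zero_mor (f \o (q1 \o x))).
    { rewrite comp_assoc, Hx. apply (@zm_zero _ z0 Hz). }
    destruct (Hu Z _ Hx') as [y [Ey U]].
    exists (pr HX y (q2 \o x)). split.
    + unfold mT. apply (prod_ext HYT); simp; auto.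
    + intros h' Eh. apply (prod_ext HX); simp.
      * apply U. rewrite <- Eh. unfold mT. simp. reflexivity.
      * rewrite <- Eh. unfold mT. simp. reflexivity.
Qed.

Lemma mT_mono : is_mono m -> is_mono mT.
Proof.
  intros Hm Z x y E. apply (prod_ext HX).
  - apply Hm. assert (E1 := f_equal (fun h => q1 \o h) E). unfold mT in E1. simpl in E1.
    simp. autorewrite with cat in E1. exact E1.
  - assert (E1 := f_equal (fun h => q2 \o h) E). unfold mT in E1. simpl in E1.
    autorewrite with cat in E1. exact E1.
Qed.

End WithY.

Hypothesis Hprod : forall A B : C, exists P (p1 : Hom P A) (p2 : Hom P B), is_product p1 p2.

Lemma S_proto : proto_complete X -> proto_complete S.
Proof.
  intros HXc Y m [B [f [[s Hs] Hk]]].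
  destruct (Hprod Y T) as [YT [q1 [q2 HYT]]].
  assert (Hm : protosplit_mono (mT _ _ _ _ HYT m)).
  { exists B, (f \o q1). split.
    - exists (pr HYT s (zm B T)). simp. exact Hs.
    - exact (ker_lemma _ _ _ _ HYT m f Hk). }
  destruct (HXc _ _ Hm) as [r Hr].
  eexists. apply (retr_lemma _ _ _ _ HYT m r Hr).
Qed.

Lemma S_complete : complete X -> complete S.
Proof.
  intros HXc Y m [B [f Hk]].
  destruct (Hprod Y T) as [YT [q1 [q2 HYT]]].
  assert (Hm : normal_mono (mT _ _ _ _ HYT m)).
  { exists B, (f \o q1). exact (ker_lemma _ _ _ _ HYT m f Hk). }
  destruct (HXc _ _ Hm) as [r Hr].
  eexists. apply (retr_lemma _ _ _ _ HYT m r Hr).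
Qed.

Lemma S_strong : strong_complete X -> strong_complete S.
Proof.
  intros HXc Y m [B [f [[s Hs] Hk]]].
  destruct (Hprod Y T) as [YT [q1 [q2 HYT]]].
  assert (Hm : protosplit_mono (mT _ _ _ _ HYT m)).
  { exists B, (f \o q1). split.
    - exists (pr HYT s (zm B T)). simp. exact Hs.
    - exact (ker_lemma _ _ _ _ HYT m f Hk). }
  destruct (HXc _ _ Hm) as [r [Hr U]].
  exists (pS \o (r \o pr HYT (idm Y) (zm Y T))). split.
  - apply (retr_lemma _ _ _ _ HYT m r Hr).
  - intros r' Hr'.
    assert (E : r = pr HX (r' \o q1) q2).
    { apply U. unfold mT. simp. rewrite comp_assoc, Hr'. simp.
      apply (prod_ext HX); simp; reflexivity. }
    rewrite E. simp. reflexivity.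
Qed.

Lemma S_star : complete_star X -> complete_star S.
Proof.
  intros HXc Y m [Hmono [R [r1 [r2 [[Hjm [Hrefl [Hsym Htr]]] [P [pi1 [pi2 [HP [mt [E1 [E2 [Epb Hpb]]]]]]]]]]]]].
  destruct (Hprod Y T) as [YT [q1 [q2 HYT]]].
  destruct (Hprod T T) as [TT [t1 [t2 HTT]]].
  destruct (Hprod R TT) as [R' [a1 [a2 HR']]].
  destruct (Hprod X X) as [P' [b1 [b2 HP']]].
  assert (E1' : forall Z (x : Hom Z P), r1 \o (mt \o x) = m \o (pi1 \o x)).
  { intros. rewrite !comp_assoc, E1. reflexivity. }
  assert (E2' : forall Z (x : Hom Z P), r2 \o (mt \o x) = m \o (pi2 \o x)).
  { intros. rewrite !comp_assoc, E2. reflexivity. }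
  assert (Hm : bourn_normal (mT _ _ _ _ HYT m)).
  { split; [apply (mT_mono _ _ _ _ HYT m Hmono)|].
    exists R', (pr HYT (r1 \o a1) (t1 \o a2)), (pr HYT (r2 \o a1) (t2 \o a2)).
    split; [split; [|split; [|split]]|].
    - intros Z a b F1 F2. autorewrite with cat in F1, F2.
      apply pr_inj in F1 as [G1 G2]. apply pr_inj in F2 as [G3 G4].
      apply (prod_ext HR').
      + apply Hjm; assumption.
      + apply (prod_ext HTT); simp; assumption.
    - intros Z x. destruct (Hrefl Z (q1 \o x)) as [c0 [F1 F2]].
      exists (pr HR' c0 (pr HTT (q2 \o x) (q2 \o x))). simp. rewrite F1, F2.
      split; apply (prod_ext HYT); simp; reflexivity.
    - intros Z a. destruct (Hsym Z (a1 \o a)) as [c0 [F1 F2]].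
      exists (pr HR' c0 (pr HTT (t2 \o (a2 \o a)) (t1 \o (a2 \o a)))). simp.
      rewrite F1, F2. split; reflexivity.
    - intros Z a b F. autorewrite with cat in F. apply pr_inj in F as [G1 G2].
      destruct (Htr Z (a1 \o a) (a1 \o b) G1) as [c0 [F1 F2]].
      exists (pr HR' c0 (pr HTT (t1 \o (a2 \o a)) (t2 \o (a2 \o b)))). simp.
      rewrite F1, F2. split; reflexivity.
    - exists P', b1, b2. split; [exact HP'|].
      exists (pr HR' (mt \o pr HP (pS \o b1) (pS \o b2)) (pr HTT (pT \o b1) (pT \o b2))).
      unfold mT. split; [|split; [|split]].
      + simp. rewrite E1'. simp. reflexivity.
      + simp. rewrite E2'. simp. reflexivity.
      + simp. rewrite E1'. simp. reflexivity.
      + intros Z a b F. autorewrite with cat in F. apply pr_inj in F as [G1 G2].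
        destruct (Hpb Z (a1 \o a) (pS \o b) G1) as [h0 [[H1 H2] U]].
        exists (pr HP' b (pr HX (pi2 \o h0) (t2 \o (a2 \o a)))). split.
        * split; [|simp; reflexivity].
          apply (prod_ext HR'); simp.
          -- assert (Eh : pr HP (pS \o b) (pi2 \o h0) = h0)
               by (apply (prod_ext HP); simp; auto).
             rewrite Eh. exact H1.
          -- apply (prod_ext HTT); simp; auto.
        * intros h' [K1 K2]. apply (prod_ext HP'); simp.
          -- symmetry; exact K2.
          -- apply (prod_ext HX); simp.
             ++ assert (V1 : mt \o pr HP (pS \o (b1 \o h')) (pS \o (b2 \o h')) = a1 \o a)
                  by (rewrite <- K1; simp; reflexivity).
                assert (V2 : pi1 \o pr HP (pS \o (b1 \o h')) (pS \o (b2 \o h')) = pS \o b)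
                  by (simp; rewrite K2; reflexivity).
                rewrite (U _ (conj V1 V2)). simp. reflexivity.
             ++ rewrite <- K1. simp. reflexivity. }
  destruct (HXc _ _ Hm) as [r Hr].
  eexists. apply (retr_lemma _ _ _ _ HYT m r Hr).
Qed.

End Main.

Theorem proposition4p12 (C : Category) :
  @pointed C -> @has_finite_limits C -> @protomodular C ->
  forall (S T X : C) (pS : Hom X S) (pT : Hom X T),
    is_product pS pT ->
    ((proto_complete X -> proto_complete S /\ proto_complete T) /\
     (complete X -> complete S /\ complete T) /\
     (complete_star X -> complete_star S /\ complete_star T) /\
     (strong_complete X -> strong_complete S /\ strong_complete T)).
Proof.
  intros [z0 Hz] Hfl _ S T X pS pT HX.
  pose proof (has_prod Hfl) as Hprod.
  pose proof (prod_sym HX) as HX'.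
  split; [|split; [|split]]; intro H; split.
  - exact (S_proto z0 Hz S T X pS pT HX Hprod H).
  - exact (S_proto z0 Hz T S X pT pS HX' Hprod H).
  - exact (S_complete z0 Hz S T X pS pT HX Hprod H).
  - exact (S_complete z0 Hz T S X pT pS HX' Hprod H).
  - exact (S_star z0 Hz S T X pS pT HX Hprod H).
  - exact (S_star z0 Hz T S X pT pS HX' Hprod H).
  - exact (S_strong z0 Hz S T X pS pT HX Hprod H).
  - exact (S_strong z0 Hz T S X pT pS HX' Hprod H).
Qed.
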